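(* Let $S$ be a semigroup and let $E(S)$ denote its set of idempotents. Then $S$ is a local group if and only if either $E(S)=\emptyset$, or $S$ has a minimal ideal $J$ which is a completely simple semigroup and contains $E(S)$.
   Context: A semigroup $S$ is a local group if $eSe$ is a group for every idempotent $e$ of $S$ (so a semigroup without idempotents is a local group). A semigroup is simple if it has a unique ideal (itself). $E(S)$ is partially ordered by $e\le f$ iff $ef=fe=e$. A simple semigroup is completely simple if its set of idempotents has minimal elements for $\le$. A minimal ideal of $S$ is an ideal containing no strictly smaller ideal. *)

(* Defs.v *)
Section Semigroups.
Variables (T : Type) (op : T -> T -> T).

Definition idempotent (e : T) : Prop := op e e = e.

Definition idem_le (e f : T) : Prop := op e f = e /\ op f e = e.

Definition is_group (A : T -> Prop) : Prop :=
  (forall x y, A x -> A y -> A (op x y)) /\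
  exists u, A u /\
    forall a, A a -> op u a = a /\ op a u = a /\
      exists b, A b /\ op a b = u /\ op b a = u.

Definition corner (e : T) : T -> Prop :=
  fun x => exists s, x = op (op e s) e.

Definition local_group : Prop :=
  forall e, idempotent e -> is_group (corner e).

Definition ideal_of (A I : T -> Prop) : Prop :=
  (exists x, I x) /\ (forall x, I x -> A x) /\
  (forall a x, A a -> I x -> I (op a x) /\ I (op x a)).

Definition whole : T -> Prop := fun _ => True.

Definition minimal_ideal (J : T -> Prop) : Prop :=
  ideal_of whole J /\
  forall I, ideal_of whole I -> (forall x, I x -> J x) ->
    forall x, J x -> I x.

Definition simple (A : T -> Prop) : Prop :=
  forall I, ideal_of A I -> forall x, A x -> I x.

Definition completely_simple (A : T -> Prop) : Prop :=
  (forall x y, A x -> A y -> A (op x y)) /\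
  simple A /\
  exists e, A e /\ idempotent e /\
    forall f, A f -> idempotent f -> idem_le f e -> f = e.

End Semigroups.

(* Main.v *)
Require Import Defs.
From Stdlib Require Import Classical.

Section S.
Variables (T : Type) (op : T -> T -> T).
Hypothesis assoc : forall x y z, op x (op y z) = op (op x y) z.

Lemma idr e x : idempotent T op e -> op (op x e) e = op x e.
Proof. intro H; rewrite <- assoc, H; reflexivity. Qed.
Lemma idl e x : idempotent T op e -> op e (op e x) = op e x.
Proof. intro H; rewrite assoc, H; reflexivity. Qed.

Section Back.
Variable J : T -> Prop.
Hypothesis Jcl : forall x y, J x -> J y -> J (op x y).
Hypothesis Jsimple : simple T op J.
Hypothesis Jid : forall a x, J x -> J (op a x).

Lemma span a b : J a -> J b -> exists x y, J x /\ J y /\ b = op (op x a) y.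
Proof.
  intros Ha Hb.
  apply (Jsimple (fun z => exists x y, J x /\ J y /\ z = op (op x a) y)); auto.
  split; [|split].
  - exists (op (op a a) a); exists a, a; auto.
  - intros z (x & y & Hx & Hy & ->); auto.
  - intros c z Hc (x & y & Hx & Hy & ->); split.
    + exists (op c x), y; repeat split; auto; rewrite !assoc; reflexivity.
    + exists x, (op y c); repeat split; auto; rewrite !assoc; reflexivity.
Qed.

Variable e0 : T.
Hypothesis He0 : J e0.
Hypothesis Ie0 : idempotent T op e0.
Hypothesis Pe0 : forall f, J f -> idempotent T op f -> idem_le T op f e0 -> f = e0.

Lemma prim f : J f -> idempotent T op f ->
  forall g, J g -> idempotent T op g -> idem_le T op g f -> g = f.
Proof.
  intros Hf If g Hg Ig [Hgf Hfg].
  destruct (span e0 f He0 Hf) as (p0 & q0 & Hp0 & Hq0 & Ef).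
  set (p := op (op f p0) e0). set (q := op (op e0 q0) f).
  assert (Hp : J p) by (unfold p; auto).
  assert (Hq : J q) by (unfold q; auto).
  assert (Epq : op p q = f).
  { unfold p, q.
    transitivity (op (op f (op (op p0 e0) q0)) f).
    - rewrite !assoc. rewrite (idr e0 (op f p0) Ie0). reflexivity.
    - rewrite <- Ef. rewrite If, If. reflexivity. }
  assert (pe : op p e0 = p) by (unfold p; apply idr; auto).
  assert (eq : op e0 q = q) by (unfold q; rewrite !assoc, Ie0; reflexivity).
  assert (fp : op f p = p) by (unfold p; rewrite !assoc, If; reflexivity).
  assert (qf : op q f = q) by (unfold q; apply idr; auto).
  assert (Eqp : op q p = e0).
  { apply Pe0; auto.
    - unfold idempotent. rewrite <- assoc, (assoc p q p), Epq, fp; reflexivity.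
    - split.
      + rewrite <- assoc, pe; reflexivity.
      + rewrite assoc, eq; reflexivity. }
  assert (Et : op (op q g) p = e0).
  { apply Pe0; auto.
    - unfold idempotent.
      transitivity (op (op q (op (op g (op p q)) g)) p).
      + rewrite !assoc; try reflexivity.
      + rewrite Epq, Hgf, Ig. reflexivity.
    - split.
      + rewrite <- assoc, pe; reflexivity.
      + rewrite !assoc, eq; reflexivity. }
  transitivity (op (op p (op (op q g) p)) q).
  - rewrite !assoc. rewrite Epq, Hfg, <- (assoc g p q), Epq, Hgf. reflexivity.
  - rewrite Et, pe, Epq; reflexivity.
Qed.

Lemma group_of e : J e -> idempotent T op e -> is_group T op (corner T op e).
Proof.
  intros Hj Ie.
  assert (Pe := prim e Hj Ie).
  split.
  - intros x y (s & ->) (t & ->). exists (op (op s e) t).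
    rewrite !assoc. rewrite (idr e _ Ie). reflexivity.
  - exists e. split.
    + exists e. rewrite Ie, Ie; reflexivity.
    + intros a (s & ->).
      assert (ea : op e (op (op e s) e) = op (op e s) e) by (rewrite !assoc, Ie; reflexivity).
      assert (ae : op (op (op e s) e) e = op (op e s) e) by (apply idr; auto).
      set (a := op (op e s) e) in *.
      assert (Ha : J a) by (unfold a; apply Jid; auto).
      split; [exact ea|split; [exact ae|]].
      destruct (span a e Ha Hj) as (x & y & Hx & Hy & Ee).
      set (u := op (op e x) e). set (v := op (op e y) e).
      assert (Hu : J u) by (unfold u; auto).
      assert (Hv : J v) by (unfold v; auto).
      assert (ue : op u e = u) by (unfold u; apply idr; auto).
      assert (eu : op e u = u) by (unfold u; rewrite !assoc, Ie; reflexivity).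
      assert (ve : op v e = v) by (unfold v; apply idr; auto).
      assert (ev : op e v = v) by (unfold v; rewrite !assoc, Ie; reflexivity).
      assert (Euav : op (op u a) v = e).
      { unfold u, v.
        transitivity (op (op e (op (op x (op (op e a) e)) y)) e).
        - rewrite !assoc. reflexivity.
        - rewrite ea, ae, <- Ee, Ie, Ie. reflexivity. }
      exists (op v u). split; [|split].
      ++ exists (op (op y e) x). unfold u, v. rewrite !assoc, (idr e (op e y) Ie). reflexivity.
      ++ apply Pe; auto.
        * unfold idempotent.
          transitivity (op (op (op a v) (op (op u a) v)) u).
          -- rewrite !assoc; reflexivity.
          -- rewrite Euav, <- (assoc a v e), ve, <- assoc; reflexivity.
        * split.
          -- rewrite <- !assoc, ue; reflexivity.
          -- rewrite assoc, ea; reflexivity.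
      ++ apply Pe; auto.
        * unfold idempotent.
          transitivity (op (op v (op (op u a) v)) (op u a)).
          -- rewrite !assoc; reflexivity.
          -- rewrite Euav, ve, !assoc; reflexivity.
        * split.
          -- rewrite <- assoc, ae; reflexivity.
          -- rewrite !assoc, ev; reflexivity.
Qed.
End Back.

Section Fwd.
Hypothesis LG : local_group T op.

Lemma unit_e e : idempotent T op e -> forall a, corner T op e a ->
  exists b, corner T op e b /\ op a b = e /\ op b a = e.
Proof.
  intros Ie a Ha.
  destruct (LG e Ie) as [_ [u [[s Hu] H]]].
  assert (Ce : corner T op e e) by (exists e; rewrite Ie, Ie; reflexivity).
  destruct (H e Ce) as [_ [Heu _]].
  assert (ue : u = e).
  { rewrite <- Heu. rewrite Hu, !assoc, Ie. reflexivity. }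
  destruct (H a Ha) as (_ & _ & b & Hb & E1 & E2). rewrite ue in *. exists b; auto.
Qed.

Definition JJ e := fun z => exists a b, z = op (op a e) b.

Lemma corner_J e x : idempotent T op e -> corner T op e x -> JJ e x.
Proof. intros Ie (s & ->). exists (op e s), e. symmetry; apply idr; auto. Qed.

Lemma key e (I : T -> Prop) : idempotent T op e ->
  (forall c x, JJ e c -> I x -> I (op c x) /\ I (op x c)) ->
  forall y, JJ e y -> I y -> I e.
Proof.
  intros Ie HI y (a & b & ->) Hy.
  assert (Je : JJ e e) by (exists e, e; rewrite Ie, Ie; reflexivity).
  assert (Ca : corner T op e (op (op e a) e)) by (exists a; reflexivity).
  assert (Cb : corner T op e (op (op e b) e)) by (exists b; reflexivity).
  destruct (unit_e e Ie _ Ca) as (g & Cg & _ & Hg).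
  destruct (unit_e e Ie _ Cb) as (h & Ch & Hh & _).
  assert (E : op (op g (op (op e (op (op a e) b)) e)) h = e).
  { transitivity (op (op g (op (op e a) e)) (op (op (op e b) e) h)).
    - rewrite !assoc. rewrite (idr e _ Ie). reflexivity.
    - rewrite Hg, Hh, Ie. reflexivity. }
  rewrite <- E.
  apply (fun H => proj2 (HI h _ (corner_J e h Ie Ch) H)).
  apply (fun H => proj1 (HI g _ (corner_J e g Ie Cg) H)).
  apply (fun H => proj2 (HI e _ Je H)).
  apply (proj1 (HI e _ Je Hy)).
Qed.

Lemma JJ_ideal e : idempotent T op e -> ideal_of T op (whole T) (JJ e).
Proof.
  intro Ie. split; [|split].
  - exists e, e, e. rewrite Ie, Ie; reflexivity.
  - intros; exact I.
  - intros c x _ (a & b & ->). split.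
    + exists (op c a), b. rewrite !assoc; reflexivity.
    + exists a, (op b c). rewrite !assoc; reflexivity.
Qed.

Lemma JJ_e e : idempotent T op e -> JJ e e.
Proof. intro Ie. exists e, e. rewrite Ie, Ie; reflexivity. Qed.

Lemma JJ_min e : idempotent T op e -> minimal_ideal T op (JJ e).
Proof.
  intro Ie. split; [apply JJ_ideal; auto|].
  intros I0 [[y Hy] [_ HI]] Sub x (a & b & ->).
  assert (IE : I0 e).
  { apply (key e I0 Ie) with y; auto. intros c z _ Hz. exact (HI c z I Hz). }
  apply (HI b _ I). apply (HI a _ I). auto.
Qed.

Lemma JJ_all e f : idempotent T op e -> idempotent T op f -> JJ e f.
Proof.
  intros Ie If.
  assert (H : forall x, JJ f x -> JJ e x /\ JJ f x).
  { apply (proj2 (JJ_min f If)).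
    - split; [|split].
      + exists (op e f). split.
        * exists e, f. rewrite Ie; reflexivity.
        * exists e, f. symmetry. apply idr; auto.
      + intros; exact I.
      + intros c z _ [Hz1 Hz2]. destruct (JJ_ideal e Ie) as (_ & _ & H1).
        destruct (JJ_ideal f If) as (_ & _ & H2).
        destruct (H1 c z I Hz1), (H2 c z I Hz2). tauto.
    - tauto. }
  apply H. apply JJ_e; auto.
Qed.

Lemma JJ_cs e : idempotent T op e -> completely_simple T op (JJ e).
Proof.
  intro Ie. split; [|split].
  - intros x y (a & b & ->) (c & d & ->).
    exists a, (op b (op (op c e) d)). rewrite !assoc; reflexivity.
  - intros I0 [[y Hy] [Sub HI]] x (c & d & ->).
    assert (IE : I0 e).
    { apply (key e I0 Ie) with y; auto. }
    assert (E : op (op c e) d = op (op (op c e) e) (op e d)).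
    { rewrite !assoc. rewrite !(idr e _ Ie). reflexivity. }
    rewrite E.
    apply (HI (op e d)). { exists e, d. rewrite Ie; reflexivity. }
    apply (HI (op c e)). { exists c, e. symmetry; apply idr; auto. }
    exact IE.
  - exists e. split; [apply JJ_e; auto|split; auto].
    intros f _ If [Hfe Hef].
    assert (Cf : corner T op e f) by (exists f; rewrite Hef, Hfe; reflexivity).
    destruct (unit_e e Ie f Cf) as (g & _ & _ & Hg).
    rewrite <- Hef at 1. rewrite <- Hg at 1. rewrite <- assoc, If. exact Hg.
Qed.

End Fwd.
End S.

Theorem proposition1 (T : Type) (op : T -> T -> T)
  (assoc : forall x y z, op x (op y z) = op (op x y) z) :
  local_group T op <->
  ((forall e, ~ idempotent T op e) \/
   exists J : T -> Prop,
     minimal_ideal T op J /\ completely_simple T op J /\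
     (forall e, idempotent T op e -> J e)).
Proof.
  split.
  - intro LG. destruct (classic (exists e, idempotent T op e)) as [[e Ie]|N].
    + right. exists (JJ T op e). split; [|split].
      * apply JJ_min; auto.
      * apply JJ_cs; auto.
      * intros f If. apply JJ_all; auto.
    + left. intros e Ie. apply N. eauto.
  - intros [N|(J & [[_ [_ Jid]] _] & [Jcl [Js (e0 & He0 & Ie0 & Pe0)]] & Hall)].
    + intros e Ie. exfalso. exact (N e Ie).
    + intros e Ie. apply (group_of T op assoc J) with e0; auto.
      intros a x Hx. apply (Jid a x I Hx).
Qed.
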